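(* Let $S\subset\mathbb{N}$ be a WM set with density $d(S)<1$. Then $S$ is not an IP*-set, i.e. there exists an IP-set $E$ with $E\cap S=\emptyset$.
   Context: $\mathbb{N}=\{1,2,\dots\}$. An IP-set is a set $\{p_{i_1}+\dots+p_{i_k}: k\in\mathbb{N},\ i_1<\dots<i_k\}$ for an infinite sequence $(p_i)$ of natural numbers. $S$ is an IP*-set if $S$ meets every IP-set. $\Omega=\{0,1\}^{\mathbb{N}}$ with product topology and left shift $T$; $X_{1_S}$ is the closure of $\{T^n1_S:n\ge0\}$. A point $\xi$ is generic for $(X,\mu,T)$ if $\frac1N\sum_{n=0}^{N-1}f(T^n\xi)\to\int f\,d\mu$ for all continuous $f$. $d(S)=\lim_N\frac1N|S\cap\{1,\dots,N\}|$. $S$ is a WM set if for some $T$-invariant Borel probability $\mu$ on $X_{1_S}$, $1_S$ is generic for $(X_{1_S},\mu,T)$, this system is weakly mixing, and $d(S)>0$. *)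

(* Defs.v *)
From HB Require Import structures.
From mathcomp Require Import all_boot all_order all_algebra.
From mathcomp Require Import all_classical all_reals all_analysis.
Set Implicit Arguments. Unset Strict Implicit. Unset Printing Implicit Defensive.
Import Order.TTheory GRing.Theory Num.Theory.
Import numFieldTopology.Exports numFieldNormedType.Exports.
Local Open Scope classical_set_scope.
Local Open Scope ring_scope.

(* Omega = {0,1}^N with the product topology (mathcomp-analysis' cantor_space).
   Coordinate k : nat (k = 0,1,2,...) represents the natural number k+1,
   since the paper's N = {1,2,...}. *)
Definition Omega : topologicalType := cantor_space.

Definition shift (x : Omega) : Omega := fun k => x k.+1.

Definition OmegaB := g_sigma_algebraType (@open Omega).

Definition indic (S : set nat) : Omega := fun k => `[< S k.+1 >].

Definition orbit_closure (xi : Omega) : set Omega :=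
  closure (range (fun n => iter n shift xi)).

(* A Borel probability measure on X (encoded as a Borel probability on Omega
   giving full mass to the closed set X). *)
Definition supported_on {R : realType} (mu : probability OmegaB R) (X : set Omega) :=
  mu (X : set OmegaB) = 1%E.

Definition shift_invariant {R : realType} (mu : probability OmegaB R) :=
  forall A : set OmegaB, measurable A -> mu (shift @^-1` A) = mu A.

Definition generic_point {R : realType} (X : set Omega)
    (mu : probability OmegaB R) (xi : Omega) :=
  forall f : Omega -> R, {within X, continuous f} ->
    (fun N : nat => N%:R^-1 * \sum_(n < N) f (iter n shift xi))
      @ \oo --> Rintegral mu (X : set OmegaB) f.

Definition weakly_mixing {R : realType} (X : set Omega) (mu : probability OmegaB R) :=
  forall A B : set OmegaB, measurable A -> measurable B ->
    A `<=` X -> B `<=` X ->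
    (fun N : nat => N%:R^-1 * \sum_(n < N)
        `| fine (mu ((iter n shift @^-1` A) `&` B)) - fine (mu A) * fine (mu B) |)
      @ \oo --> (0 : R).

Definition dens_avg {R : realType} (S : set nat) (N : nat) : R :=
  N%:R^-1 * (\sum_(1 <= k < N.+1) (if `[< S k >] then 1 else 0)).

Definition has_density {R : realType} (S : set nat) (d : R) :=
  (fun N => dens_avg (R := R) S N) @ \oo --> d.

Definition WM_set (R : realType) (S : set nat) :=
  (exists mu : probability OmegaB R,
      [/\ supported_on mu (orbit_closure (indic S)), shift_invariant mu,
          generic_point (orbit_closure (indic S)) mu (indic S)
        & weakly_mixing (orbit_closure (indic S)) mu]) /\
  exists d : R, has_density S d /\ 0 < d.

Definition FS (p : nat -> nat) : set nat :=
  [set m | exists s : seq nat, [/\ s != [::], sorted ltn s & m = (\sum_(i <- s) p i)%N]].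

Definition IP_set (E : set nat) :=
  exists p : nat -> nat, (forall i, (0 < p i)%N) /\ E = FS p.

Definition IPstar (S : set nat) :=
  forall E, IP_set E -> E `&` S !=set0.

(* Main.v *)
Require Import Defs.
From HB Require Import structures.
From mathcomp Require Import all_boot all_order all_algebra.
From mathcomp Require Import all_classical all_reals all_analysis.
Import Order.TTheory GRing.Theory Num.Theory.
Import numFieldTopology.Exports numFieldNormedType.Exports.
Local Open Scope classical_set_scope.
Local Open Scope ring_scope.
Set Implicit Arguments. Unset Strict Implicit. Unset Printing Implicit Defensive.
From mathcomp Require Import lra ring.

Lemma near_coord (x : Omega) (s : nat) : \forall y \near x, y s = x s.
Proof.
have := @proj_continuous nat (fun _ => bool) s x [set x s].
apply; exact: discrete_set1.
Qed.

Lemma near_coords (x : Omega) (F : seq nat) :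
  \forall y \near x, forall s, s \in F -> y s = x s.
Proof.
elim: F => [|a F IH]; first by apply: (@nearW _ (nbhs x) _ (@nbhs_filter Omega x)) => y s.
refine (@filterS2 _ (nbhs x) (@nbhs_filter Omega x) _ _ _ _ IH (near_coord x a)) => y H1 H2 s.
rewrite inE => /orP[/eqP->//|]; exact: H1.
Qed.

Lemma shift_continuous : continuous Defs.shift.
Proof.
move=> x.
have := @pointwise_cvgP nat bool (Defs.shift @ x) (Defs.shift x) _.
move=> [_ ]. apply. move=> t.
rewrite /Defs.shift /=.
have := @proj_continuous nat (fun _ => bool) t.+1 x.
by [].
Qed.

Lemma iter_shift n (x : Omega) k : iter n Defs.shift x k = x (k + n)%N.
Proof. by elim: n k => [|n IH] k /=; [rewrite addn0 | rewrite /Defs.shift IH addSnnS]. Qed.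

Lemma orbit_inv xi x : orbit_closure xi x -> orbit_closure xi (Defs.shift x).
Proof.
move=> Hx B nB.
have nB' : nbhs x (Defs.shift @^-1` B) by exact: shift_continuous.
have [y [[n _ <-] yB]] := Hx _ nB'.
by exists (iter n.+1 Defs.shift xi); split => //; exists n.+1.
Qed.

Lemma orbit_inv_iter xi x n : orbit_closure xi x -> orbit_closure xi (iter n Defs.shift x).
Proof. by elim: n => [//|n IH] /= /IH /orbit_inv. Qed.

Definition AF (F : seq nat) : set Omega := [set x | all (fun s => ~~ x s) F].

Lemma AF_open F : open (AF F).
Proof.
rewrite openE => x Ax.
rewrite /interior.
refine (@filterS _ (nbhs x) (@nbhs_filter Omega x) _ _ _ (near_coords x F)).
move=> y Hy; rewrite /AF /=; apply/allP => s sF; rewrite Hy //.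
by move/allP: Ax => /(_ s sF).
Qed.

Lemma open_measurable_B (A : set Omega) : open A -> measurable (A : set OmegaB).
Proof. by move=> oA; apply: sub_sigma_algebra. Qed.

Lemma orbit_measurable xi : measurable (orbit_closure xi : set OmegaB).
Proof.
rewrite -[orbit_closure xi]setCK; apply: measurableC.
apply: open_measurable_B; rewrite openC; exact: closed_closure.
Qed.

Lemma AF_measurable F : measurable (AF F : set OmegaB).
Proof. apply: open_measurable_B; exact: AF_open. Qed.

Lemma indic_AF_continuous (R : realType) F : continuous (\1_(AF F) : Omega -> R).
Proof.
move=> x; apply: (@cvg_near_cst _ _ _ _ (nbhs x) (@nbhs_filter Omega x)).
refine (@filterS _ (nbhs x) (@nbhs_filter Omega x) _ _ _ (near_coords x F)).
move=> y Hy; rewrite /indic; congr (_%:R).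
have E : all (fun s => ~~ y s) F = all (fun s => ~~ x s) F.
  by apply: eq_in_all => s sF; rewrite Hy.
rewrite /AF. case: (boolP (y \in _)) => [/set_mem H|/negP H]; case: (boolP (x \in _)) => [/set_mem H'|/negP H'] //. by exfalso; apply: H'; apply/mem_set; rewrite /= -E. by exfalso; apply: H; apply/mem_set; rewrite /= E.
Qed.


Lemma invbound0 (R : realType) (x : R) : 1 <= x -> x^-1 <= 2 * (x + 1)^-1.
Proof.
move=> x1.
have x0 : x != 0 by apply: lt0r_neq0; lra.
have x10 : x + 1 != 0 by apply: lt0r_neq0; lra.
rewrite -subr_ge0.
have -> : 2 * (x + 1)^-1 - x^-1 = (x - 1) / (x * (x + 1)) by field; rewrite x0 x10.
apply: divr_ge0; first lra.
apply: mulr_ge0; lra.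
Qed.
Lemma invbound (R : realType) (N : nat) : (0 < N)%N -> (N%:R^-1 : R) <= 2 * (N.+1)%:R^-1.
Proof.
move=> N0; rewrite -[N.+1%:R]natr1; apply: invbound0; by rewrite ler1n.
Qed.

Section Main.
Variable R : realType.
Variable S : set nat.
Variable mu : probability OmegaB R.
Let xi := Defs.indic S.
Let X := orbit_closure xi.
Hypothesis Hgen : generic_point X mu xi.
Hypothesis Hwm : weakly_mixing X mu.

Definition aF F := fine (mu (AF F `&` X)).

Lemma indic_iter F n :
  (\1_(AF F) (iter n Defs.shift xi) : R) = (all (fun s => ~~ xi (s + n)%N) F)%:R.
Proof.
rewrite /indic.
have E : all (fun s => ~~ iter n Defs.shift xi s) F = all (fun s => ~~ xi (s + n)%N) F.
  by apply: eq_all => s; rewrite iter_shift.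
have -> : (iter n Defs.shift xi \in AF F) = all (fun s => ~~ xi (s + n)%N) F; last by [].
case: (boolP (_ \in _)) => [/set_mem H|/negP H].
  by rewrite -E; apply/esym; exact H.
by apply/esym/negP => H'; apply: H; apply/mem_set; rewrite /AF /= E.
Qed.

Lemma gen_AF F : (fun N : nat => N%:R^-1 *
   \sum_(n < N) ((all (fun s => ~~ xi (s + n)%N) F)%:R : R)) @ \oo --> aF F.
Proof.
have := Hgen (@continuous_subspaceT _ _ X _ (@indic_AF_continuous R F)).
rewrite /Rintegral integral_indic; last 2 first.
- exact: orbit_measurable.
- exact: AF_measurable.
move=> H; rewrite /aF.
have E : forall N : nat, N%:R^-1 * \sum_(n < N) (\1_(AF F) (iter n Defs.shift xi) : R)
  = N%:R^-1 * \sum_(n < N) ((all (fun s => ~~ xi (s + n)%N) F)%:R : R).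
  by move=> N; congr (_ * _); apply: eq_bigr => n _; rewrite indic_iter.
by rewrite -(funext E).
Qed.

Lemma preimage_AF F n :
  iter n Defs.shift @^-1` (AF F `&` X) `&` (AF F `&` X) = AF (F ++ map (addn n) F) `&` X.
Proof.
apply/seteqP; split => x /=.
  move=> [[H1 H2] [H3 H4]]; split => //.
  rewrite /AF /= all_cat H3 /= all_map.
  apply/allP => s sF /=; move/allP: H1 => /(_ s sF).
  by rewrite iter_shift addnC.
move=> [H1 H2]; rewrite /AF /= all_cat in H1; case/andP: H1 => H1 H3.
split; split => //; last exact: orbit_inv_iter.
rewrite /AF /=; apply/allP => s sF; rewrite iter_shift addnC.
by move: H3; rewrite all_map => /allP /(_ s sF).
Qed.

Lemma wm_AF F : (fun N : nat => N%:R^-1 * \sum_(n < N)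
   `| aF (F ++ map (addn n) F) - aF F * aF F |) @ \oo --> (0 : R).
Proof.
have mA : measurable (AF F `&` X : set OmegaB).
  apply: measurableI; [exact: AF_measurable | exact: orbit_measurable].
have := Hwm mA mA (@subIsetr _ _ _) (@subIsetr _ _ _).
have E : forall N : nat, N%:R^-1 * \sum_(n < N)
     `| fine (mu ((iter n Defs.shift @^-1` (AF F `&` X)) `&` (AF F `&` X))) - fine (mu (AF F `&` X)) * fine (mu (AF F `&` X)) |
  = N%:R^-1 * \sum_(n < N) `| aF (F ++ map (addn n) F) - aF F * aF F | :> R.
  by move=> N; congr (_ * _); apply: eq_bigr => n _; rewrite preimage_AF.
by rewrite (funext E).
Qed.


Lemma step F : 0 < aF F -> exists n, [/\ (0 < n)%N,
   all (fun s => ~~ xi (s + n.-1)%N) F & 0 < aF (F ++ map (addn n) F)].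
Proof.
move=> c0; set c := aF F in c0 *.
apply: contrapT => Hn.
pose b m : R := (all (fun s => ~~ xi (s + m)%N) F)%:R.
pose g n : R := `| aF (F ++ map (addn n) F) - c * c |.
have H : forall m, c * c * b m <= g m.+1.
  move=> m; rewrite /b /g; case: (boolP (all _ _)) => Hall; last first.
    by rewrite mulr0.
  have Hle : aF (F ++ map (addn m.+1) F) <= 0.
    by rewrite leNgt; apply/negP => Hp; apply: Hn; exists m.+1; split.
  rewrite mulr1 -normrN; apply: le_trans (ler_norm _); lra.
pose u N : R := N%:R^-1 * \sum_(m < N) b m.
pose v N : R := N.+1%:R^-1 * \sum_(n < N.+1) g n.
have hu : u @ \oo --> c := @gen_AF F.
have hv : v @ \oo --> (0 : R).
  have := @wm_AF F; rewrite -cvg_shiftS; exact.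
have e1 : 0 < c / 2 by lra.
have e2 : 0 < c * c * c / 8 by rewrite divr_gt0 // !mulr_gt0.
move/cvgrPdist_lt: hu => /(_ _ e1) hu.
move/cvgrPdist_lt: hv => /(_ _ e2) hv.
suff : \forall N \near \oo, False by move/filter_ex => [].
near=> N.
have N0 : (0 < N)%N by near: N; exact: nbhs_infty_gt.
have uN : `|c - u N| < c / 2 by near: N.
have vN : `|0 - v N| < c * c * c / 8 by near: N.
have gpos : forall n, 0 <= g n by move=> n; exact: normr_ge0.
have s1 : c * c * u N <= N%:R^-1 * \sum_(n < N.+1) g n.
  rewrite /u mulrCA ler_wpM2l ?invr_ge0 ?ler0n // mulr_sumr.
  rewrite big_ord_recl -[X in X <= _]add0r; apply: lerD; first exact: gpos.
  apply: ler_sum => i _; exact: H.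
have s2 : N%:R^-1 * \sum_(n < N.+1) g n <= 2 * v N.
  rewrite /v mulrA; apply: ler_wpM2r; last exact: invbound.
  by apply: sumr_ge0 => i _; exact: gpos.
have uN' : c / 2 < u N by have := ler_norm (c - u N); lra.
have vN' : v N < c * c * c / 8.
  by rewrite sub0r normrN in vN; have := ler_norm (v N); lra.
have cc : 0 < c * c by exact: mulr_gt0.
have h3 : c * c * (c / 2) < c * c * u N by rewrite ltr_pM2l.
lra.
Unshelve. all: by end_near.
Qed.

Lemma base (d : R) : has_density S d -> d < 1 -> 0 < aF [:: 0%N].
Proof.
move=> Hd Hd1.
pose u N : R := N%:R^-1 * \sum_(n < N) ((all (fun s => ~~ xi (s + n)%N) [:: 0%N])%:R : R).
have hu : u @ \oo --> aF [:: 0%N] := @gen_AF [:: 0%N].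
have key : forall N, (0 < N)%N -> u N + dens_avg S N = 1.
  move=> N N0; rewrite /u /dens_avg -mulrDr.
  rewrite big_add1 /= big_mkord -big_split /=.
  rewrite (eq_bigr (fun _ => 1)); last first.
    move=> i _; rewrite add0n andbT /xi /Defs.indic.
    by case: (asboolP (S i.+1)) => _ /=; rewrite ?addr0 ?add0r.
  by rewrite sumr_const card_ord mulVf // pnatr_eq0 -lt0n.
have e1 : 0 < (1 - d) / 4 by lra.
move/cvgrPdist_lt: hu => /(_ _ e1) hu.
move/cvgrPdist_lt: Hd => /(_ _ e1) hd.
suff : \forall N \near \oo, 0 < aF [:: 0%N] by move/filter_ex => [].
near=> N.
have N0 : (0 < N)%N by near: N; exact: nbhs_infty_gt.
have uN : `|aF [:: 0%N] - u N| < (1 - d) / 4 by near: N.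
have dN : `|d - dens_avg S N| < (1 - d) / 4 by near: N.
have k := key N N0.
rewrite distrC in uN; rewrite distrC in dN.
have h1 := le_lt_trans (ler_norm _) uN.
have h2 := le_lt_trans (ler_norm _) dN.
lra.
Unshelve. all: by end_near.
Qed.

End Main.
Lemma FS_mem (p : nat -> nat) (Fs : nat -> seq nat) :
  Fs 0%N = [:: 0%N] -> (forall k, Fs k.+1 = Fs k ++ map (addn (p k)) (Fs k)) ->
  forall k s, sorted ltn s -> all (fun i => (i < k)%N) s ->
    (\sum_(i <- s) p i)%N \in Fs k.
Proof.
move=> F0 FS; elim=> [|k IH] s ss sk.
  case: s ss sk => [|i s] //= _ _; by rewrite big_nil F0 inE.
rewrite (bigID (fun i => (i < k)%N)) /=.
have E1 : (\sum_(i <- s | (i < k)%N) p i)%N = (\sum_(i <- [seq i <- s | (i < k)%N]) p i)%N by rewrite big_filter.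
have E2 : (\sum_(i <- s | i == k) p i)%N = (\sum_(i <- [seq i <- s | pred1 k i]) p i)%N by rewrite big_filter.
have ss' : sorted ltn [seq i <- s | (i < k)%N] by apply: sorted_filter => //; exact: ltn_trans.
have sk' : all (fun i => (i < k)%N) [seq i <- s | (i < k)%N] by rewrite all_filter; apply/allP => i _; apply/implyP.
have Hin := IH _ ss' sk'.
have us : uniq s by apply: (sorted_uniq ltn_trans) => //; exact: ltnn.
have E : (\sum_(i <- s | ~~ (i < k)%N) p i)%N = (\sum_(i <- s | i == k) p i)%N.
  rewrite big_seq_cond [RHS]big_seq_cond; apply: eq_bigl => i.
  case iS: (i \in s) => //=.
  have := allP sk i iS; rewrite ltnS => ik.
  by rewrite -leqNgt eqn_leq ik.
rewrite E1 E E2 FS.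
case: (boolP (k \in s)) => ks.
  rewrite (filter_pred1_uniq us ks) big_cons big_nil addn0 mem_cat; apply/orP; right.
  by apply/mapP; exists (\sum_(i <- [seq i <- s | (i < k)%N]) p i)%N => //; rewrite addnC.
have -> : [seq i <- s | pred1 k i] = [::].
  apply/eqP; rewrite -size_eq0 size_filter; apply/eqP/count_memPn => //.
by rewrite big_nil addn0 mem_cat Hin.
Qed.

Lemma all_lt_sumn (s : seq nat) : all (fun i => (i < (sumn s).+1)%N) s.
Proof.
elim: s => //= i s IH; rewrite ltnS leq_addr /=.
by apply: sub_all IH => x h; apply: leq_trans h _; rewrite ltnS leq_addl.
Qed.

Unset Implicit Arguments.

Theorem mainTheorem8 (R : realType) (S : set nat) (d : R)
  (HSpos : S `<=` [set n | (0 < n)%N])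
  (HWM : WM_set R S) (Hd : has_density S d) (Hd1 : d < 1) :
  ~ IPstar S /\ (exists E, IP_set E /\ E `&` S = set0).
Proof.
move: HWM => [[mu [_ _ Hgen Hwm]] _].
pose a := @aF R S mu.
have Hch : forall F : seq nat, exists n : nat, 0 < a F ->
   [/\ (0 < n)%N, all (fun s => ~~ Defs.indic S (s + n.-1)%N) F
     & 0 < a (F ++ map (addn n) F)].
  move=> F; case: (boolP (0 < a F)) => h.
    by have [n Hn] := step Hgen Hwm h; exists n => _.
  by exists 0%N => h'; move/negP: h.
have [g Hg] := choice Hch.
pose Fs := fix f k := if k is k'.+1 then f k' ++ map (addn (g (f k'))) (f k') else [:: 0%N].
pose p k := g (Fs k).
have Fs0 : Fs 0%N = [:: 0%N] by [].
have FsS : forall k, Fs k.+1 = Fs k ++ map (addn (p k)) (Fs k) by [].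
have apos : forall k, 0 < a (Fs k).
  elim=> [|k IH]; first exact: (base Hgen Hd Hd1).
  by have [_ _ ] := Hg _ IH; rewrite FsS.
have ppos : forall k, (0 < p k)%N by move=> k; have [] := Hg _ (apos k).
have notS : forall k σ, σ \in Fs k -> σ = 0%N \/ ~ S σ.
  elim=> [|k IH] σ; first by rewrite inE => /eqP ->; left.
  rewrite FsS mem_cat => /orP [/IH //|/mapP [y yF ->]]; right.
  have [pk0 Hall _] := Hg _ (apos k).
  move/allP: Hall => /(_ y yF); rewrite /Defs.indic.
  have -> : (y + (g (Fs k)).-1).+1 = (g (Fs k) + y)%N by rewrite -addnS prednK // addnC.
  by move=> /negP H HS; apply: H; exact/asboolP.
have EmS : FS p `&` S = set0.
  apply/seteqP; split => m //= [[s [sne ss ->]] Sm].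
  have Hin := FS_mem Fs0 FsS ss (all_lt_sumn s).
  case: (notS _ _ Hin) => [H0|//].
  move: sne H0; case: s {ss Hin Sm} => [//|i s'] _; rewrite big_cons.
  by have := ppos i; case: (p i).
have IPE : IP_set (FS p) by exists p.
split; last by exists (FS p).
move=> H; have [m [Em Sm]] := H _ IPE.
have : (FS p `&` S) m by [].
by rewrite EmS.
Qed.
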